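(* Let $l,n$ be positive integers, $\mathbf{x}_1,\dots,\mathbf{x}_l\in\mathbb{R}^n$, $y_1,\dots,y_l\in\mathbb{R}$, $a_1,\dots,a_l,b_1,\dots,b_l\in\mathbb{R}$. Let $\varphi:\mathbb{R}\to[0,\infty)$ be nonconstant, continuous and sublinear, with $\varphi^*=\iota_{[\alpha,\beta]}$, $\alpha<\beta$. Let $\mathbf Z\in\mathbb{R}^{l\times n}$ have $i$-th row $a_i\mathbf x_i^T$, $\bar{\mathbf y}=(b_1y_1,\dots,b_ly_l)^T$, and for $C>0$ let $\theta^*(C)$ denote an optimal solution of $$\min_{\theta\in[\alpha,\beta]^l}\ \tfrac{C}{2}\|\mathbf Z^T\theta\|^2-\langle\bar{\mathbf y},\theta\rangle.$$ Let $0<C_1<C_2<\dots<C_{\mathcal K}$ and suppose $\theta^*(C_k)$ is known for some integer $1\le k<\mathcal K$. If $$\tfrac{C_{k+1}+C_k}{2}\langle\mathbf Z^T\theta^*(C_k),a_i\mathbf x_i\rangle-\tfrac{C_{k+1}-C_k}{2}\|\mathbf Z^T\theta^*(C_k)\|\,\|a_i\mathbf x_i\|>b_iy_i,$$ then $[\theta^*(C_{k+1})]_i=\alpha$, i.e., $i\in\mathcal R$ (at $C=C_{k+1}$). Similarly, if $$\tfrac{C_{k+1}+C_k}{2}\langle\mathbf Z^T\theta^*(C_k),a_i\mathbf x_i\rangle+\tfrac{C_{k+1}-C_k}{2}\|\mathbf Z^T\theta^*(C_k)\|\,\|a_i\mathbf x_i\|<b_iy_i,$$ then $[\theta^*(C_{k+1})]_i=\beta$,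 i.e., $i\in\mathcal L$.
   Context: This dual corresponds to the primal problem $\min_{\mathbf w\in\mathbb{R}^n}\frac12\|\mathbf w\|^2+C\sum_{i=1}^l\varphi(\mathbf w^T(a_i\mathbf x_i)+b_iy_i)$ with unique solution $\mathbf w^*(C)=-C\mathbf Z^T\theta^*(C)$. Sublinear means convex and positively homogeneous; $\varphi^*(s)=\sup_t(st-\varphi(t))$; $\iota_{[\alpha,\beta]}$ is $0$ on $[\alpha,\beta]$, $+\infty$ elsewhere. At parameter $C$: $\mathcal R=\{i:-\langle\mathbf w^*(C),a_i\mathbf x_i\rangle>b_iy_i\}$, $\mathcal L=\{i:-\langle\mathbf w^*(C),a_i\mathbf x_i\rangle<b_iy_i\}$. *)

(* Defs.v *)
From HB Require Import structures.
From mathcomp Require Import all_boot all_order all_algebra.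
From mathcomp Require Import all_classical all_reals all_analysis.
Set Implicit Arguments. Unset Strict Implicit. Unset Printing Implicit Defensive.
Import Order.TTheory GRing.Theory Num.Theory.
Import numFieldNormedType.Exports.
Local Open Scope classical_set_scope.
Local Open Scope ring_scope.

Definition dotv (R : realType) (n : nat) (u v : 'cV[R]_n) : R :=
  \sum_(j < n) u j 0 * v j 0.
Definition normv (R : realType) (n : nat) (u : 'cV[R]_n) : R :=
  Num.sqrt (dotv u u).

Definition convex_fun (R : realType) (f : R -> R) : Prop :=
  forall (s t lam : R), 0 <= lam -> lam <= 1 ->
    f (lam * s + (1 - lam) * t) <= lam * f s + (1 - lam) * f t.
Definition pos_homogeneous (R : realType) (f : R -> R) : Prop :=
  forall (lam t : R), 0 < lam -> f (lam * t) = lam * f t.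
Definition sublinear (R : realType) (f : R -> R) : Prop :=
  convex_fun f /\ pos_homogeneous f.

Definition fconj (R : realType) (f : R -> R) (s : R) : \bar R :=
  ereal_sup [set ((s * t - f t)%:E) | t in [set: R]].
Definition iota_int (R : realType) (alpha beta : R) (s : R) : \bar R :=
  if (alpha <= s) && (s <= beta) then 0%E else (+oo)%E.

Definition Zmat (R : realType) (l n : nat) (a : 'I_l -> R) (x : 'I_l -> 'cV[R]_n)
  : 'M[R]_(l, n) := \matrix_(i < l, j < n) (a i * x i j 0).
Definition ybar (R : realType) (l : nat) (b y : 'I_l -> R) : 'cV[R]_l :=
  \col_(i < l) (b i * y i).

Definition dual_obj (R : realType) (l n : nat) (Z : 'M[R]_(l, n)) (yb : 'cV[R]_l)
  (C : R) (theta : 'cV[R]_l) : R :=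
  C / 2 * normv (Z^T *m theta) ^+ 2 - dotv yb theta.

Definition box_feasible (R : realType) (l : nat) (alpha beta : R) (theta : 'cV[R]_l)
  : Prop := forall i : 'I_l, alpha <= theta i 0 <= beta.

Definition dual_optimal (R : realType) (l n : nat) (Z : 'M[R]_(l, n)) (yb : 'cV[R]_l)
  (alpha beta C : R) (theta : 'cV[R]_l) : Prop :=
  box_feasible alpha beta theta /\
  forall theta' : 'cV[R]_l, box_feasible alpha beta theta' ->
    dual_obj Z yb C theta <= dual_obj Z yb C theta'.

(* Main.v *)
Require Import Defs.
From HB Require Import structures.
From mathcomp Require Import all_boot all_order all_algebra.
From mathcomp Require Import all_classical all_reals all_analysis.
From mathcomp Require Import ring lra.
Import Order.TTheory GRing.Theory Num.Theory.
Import numFieldNormedType.Exports.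
Local Open Scope classical_set_scope.
Local Open Scope ring_scope.
Set Implicit Arguments. Unset Strict Implicit.

Section Dot.
Variables (R : realType) (m : nat).
Implicit Types (u v w : 'cV[R]_m).

Lemma dotvC u v : dotv u v = dotv v u.
Proof. by apply: eq_bigr => j _; rewrite mulrC. Qed.
Lemma dotvDl u v w : dotv (u + v) w = dotv u w + dotv v w.
Proof. by rewrite /dotv -big_split; apply: eq_bigr => j _; rewrite mxE mulrDl. Qed.
Lemma dotvZl c u w : dotv (c *: u) w = c * dotv u w.
Proof. by rewrite /dotv mulr_sumr; apply: eq_bigr => j _; rewrite mxE mulrA. Qed.
Lemma dotvNl u w : dotv (- u) w = - dotv u w.
Proof. by rewrite /dotv -sumrN; apply: eq_bigr => j _; rewrite mxE mulNr. Qed.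
Lemma dotvBl u v w : dotv (u - v) w = dotv u w - dotv v w.
Proof. by rewrite dotvDl dotvNl. Qed.
Lemma dotvDr u v w : dotv w (u + v) = dotv w u + dotv w v.
Proof. by rewrite dotvC dotvDl !(dotvC w). Qed.
Lemma dotvZr c u w : dotv w (c *: u) = c * dotv w u.
Proof. by rewrite dotvC dotvZl dotvC. Qed.
Lemma dotvNr u w : dotv w (- u) = - dotv w u.
Proof. by rewrite dotvC dotvNl dotvC. Qed.
Lemma dotvBr u v w : dotv w (u - v) = dotv w u - dotv w v.
Proof. by rewrite dotvDr dotvNr. Qed.
Lemma dotv_ge0 u : 0 <= dotv u u.
Proof. by apply: sumr_ge0 => j _; rewrite -expr2 sqr_ge0. Qed.
Lemma normv2 u : normv u ^+ 2 = dotv u u.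
Proof. by rewrite /normv sqr_sqrtr // dotv_ge0. Qed.
Lemma normv_ge0 u : 0 <= normv u.
Proof. exact: sqrtr_ge0. Qed.

Lemma CS u v : dotv u v ^+ 2 <= dotv u u * dotv v v.
Proof.
have q : forall s r, 0 <= s ^+ 2 * dotv u u - 2 * s * r * dotv u v + r ^+ 2 * dotv v v.
  move=> s r; have := dotv_ge0 (s *: u - r *: v).
  rewrite !(dotvBl, dotvBr, dotvZl, dotvZr) (dotvC v u).
  set A := dotv u u; set B := dotv u v; set D := dotv v v.
  by move=> h; lra.
set A := dotv u u; set B := dotv u v; set D := dotv v v.
have hA : 0 <= A by apply: dotv_ge0.
have hD : 0 <= D by apply: dotv_ge0.
have h1 := q D B; have h2 := q B A; have h3 := q 1 B.
rewrite -/A -/B -/D in h1 h2 h3.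
have [A0|A0] := eqVneq A 0.
  have [D0|D0] := eqVneq D 0.
    rewrite A0 D0 in h3 *; nra.
  have : 0 < D by rewrite lt0r D0.
  nra.
have : 0 < A by rewrite lt0r A0.
nra.
Qed.
End Dot.

Lemma key_le0 (R : realType) (G H : R) :
  (forall t, 0 < t -> t <= 1 -> 0 <= t * G + t ^+ 2 * H) -> 0 <= G.
Proof.
move=> h; rewrite leNgt; apply/negP => G0.
set D := `|H| - G.
have D0 : 0 < D by rewrite /D; have := normr_ge0 H; lra.
have HH : H <= `|H| := ler_norm H.
have t0 : 0 < - G / D by apply: divr_gt0; lra.
have t1 : - G / D <= 1 by rewrite ler_pdivrMr // mul1r /D; have := normr_ge0 H; lra.
have := h _ t0 t1.
have -> : - G / D * G + (- G / D) ^+ 2 * H = G ^+ 2 * (H - D) / D ^+ 2.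
  by field; rewrite gt_eqF.
rewrite pmulr_lge0 ?exprn_gt0 // ?invr_gt0 ?exprn_gt0 //.
move=> h2; have g2 : 0 < G ^+ 2 by rewrite expr2 nmulr_rgt0.
have hd : H - D < 0 by rewrite /D; lra.
have := pmulr_rge0 (H - D) g2; rewrite h2 => /esym; rewrite leNgt hd.
done.
Qed.

Lemma VI (R : realType) (l n : nat) (Z : 'M[R]_(l,n)) (yb : 'cV[R]_l) (al be C : R) (th d : 'cV[R]_l) :
  dual_optimal Z yb al be C th -> box_feasible al be (th + d) ->
  0 <= C * dotv (Z^T *m th) (Z^T *m d) - dotv yb d.
Proof.
move=> [Hf Hopt] Hd.
apply: (@key_le0 _ _ (C / 2 * dotv (Z^T *m d) (Z^T *m d))) => t t0 t1.
have Hft : box_feasible al be (th + t *: d).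
  move=> j; have := Hf j; have := Hd j; rewrite !mxE => /andP[a1 a2] /andP[b1 b2].
  apply/andP; split; nra.
have := Hopt _ Hft; rewrite /dual_obj !normv2 mulmxDr -scalemxAr.
rewrite !(dotvDl, dotvDr, dotvZl, dotvZr).
rewrite (dotvC (Z^T *m d) (Z^T *m th)).
move=> h; nra.
Qed.

Lemma Zcol (R : realType) (l n : nat) (a : 'I_l -> R) (x : 'I_l -> 'cV[R]_n) i :
  (Zmat a x)^T *m delta_mx i 0 = a i *: x i.
Proof.
apply/matrixP => j k; rewrite !mxE (bigD1 i) //= big1 => [|m /negbTE hm].
  by rewrite !mxE eqxx (ord1 k) /= mulr1 addr0.
by rewrite !mxE hm mulr0.
Qed.

Lemma dotv_delta (R : realType) (l : nat) (u : 'cV[R]_l) i :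
  dotv u (delta_mx i 0) = u i 0.
Proof.
rewrite /dotv (bigD1 i) //= big1 => [|m /negbTE hm].
  by rewrite !mxE !eqxx mulr1 addr0.
by rewrite !mxE hm mulr0.
Qed.

Lemma Cpos (R : realType) (K : nat) (C : nat -> R) :
  0 < C 1%N -> (forall j, (1 <= j)%N -> (j < K)%N -> C j < C j.+1) ->
  forall j, (1 <= j)%N -> (j <= K)%N -> 0 < C j.
Proof.
move=> C1 Ci; elim=> [//|j IH] j1 jK.
case: j IH j1 jK => [|j] IH _ jK; first by [].
apply: lt_trans (Ci j.+1 _ jK) => //; exact: IH _ (ltnW jK).
Qed.

Unset Implicit Arguments. Set Strict Implicit.
Theorem corollary1 (R : realType) (l n : nat) (x : 'I_l -> 'cV[R]_n)
  (y a b : 'I_l -> R) (phi : R -> R) (alpha beta : R)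
  (K : nat) (C : nat -> R) (k : nat)
  (theta_k theta_k1 : 'cV[R]_l) :
  (0 < l)%N -> (0 < n)%N ->
  (forall t, 0 <= phi t) ->
  (exists t1 t2, phi t1 <> phi t2) ->
  continuous phi ->
  sublinear phi ->
  (forall s, fconj phi s = iota_int alpha beta s) ->
  alpha < beta ->
  0 < C 1%N ->
  (forall j, (1 <= j)%N -> (j < K)%N -> C j < C j.+1) ->
  (1 <= k)%N -> (k < K)%N ->
  dual_optimal (Zmat a x) (ybar b y) alpha beta (C k) theta_k ->
  dual_optimal (Zmat a x) (ybar b y) alpha beta (C k.+1) theta_k1 ->
  let Z := Zmat a x in
  let v := Z^T *m theta_k in
  let w := - (C k.+1 *: (Z^T *m theta_k1)) in
  forall i : 'I_l,
    ((C k.+1 + C k) / 2 * dotv v (a i *: x i)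
       - (C k.+1 - C k) / 2 * normv v * normv (a i *: x i) > b i * y i ->
     theta_k1 i 0 = alpha /\ - dotv w (a i *: x i) > b i * y i)
    /\
    ((C k.+1 + C k) / 2 * dotv v (a i *: x i)
       + (C k.+1 - C k) / 2 * normv v * normv (a i *: x i) < b i * y i ->
     theta_k1 i 0 = beta /\ - dotv w (a i *: x i) < b i * y i).
Proof.
move=> _ _ _ _ _ _ _ _ C1 Ci k1 kK opt1 opt2 Z v w i.
have Ck : 0 < C k by apply: (Cpos C1 Ci) => //; apply: ltnW.
have Ck1 : C k < C k.+1 := Ci k k1 kK.
set C1' := C k in Ck Ck1 *; set C2 := C k.+1 in Ck1 w *.
set u2 := Z^T *m theta_k1.
set z := a i *: x i.
have hw : - dotv w z = C2 * dotv u2 z by rewrite /w dotvNl dotvZl opprK.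
rewrite hw.
have V1 := VI (d := theta_k1 - theta_k) opt1.
rewrite addrC subrK in V1; have {V1} V1 := V1 opt2.1.
have V2 := VI (d := theta_k - theta_k1) opt2.
rewrite addrC subrK in V2; have {V2} V2 := V2 opt1.1.
rewrite !mulmxBr !dotvBr -/v -/u2 in V1 V2.
rewrite (dotvC v u2) -/C1' -/C2 in V1 V2.
set q := C2 *: u2 - ((C1' + C2) / 2) *: v.
have hcs := CS q z.
set t := C2 * dotv u2 z - (C1' + C2) / 2 * dotv v z.
have eqz : dotv q z = t by rewrite /q dotvBl !dotvZl.
have eqq : dotv q q = C2 * C2 * dotv u2 u2 - C2 * ((C1' + C2) / 2) * dotv u2 v
   - ((C1' + C2) / 2 * (C2 * dotv u2 v) - (C1' + C2) / 2 * ((C1' + C2) / 2) * dotv v v).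
  rewrite /q !(dotvBl, dotvBr, dotvZl, dotvZr) (dotvC v u2); ring.
rewrite eqz eqq in hcs.
set N := (C2 - C1') / 2 * normv v * normv z.
have N0 : 0 <= N.
  rewrite /N !mulr_ge0 ?normv_ge0 //; lra.
have hE := dotv_ge0 z.
have hA := dotv_ge0 v.
have hq : C2 * C2 * dotv u2 u2 - C2 * ((C1' + C2) / 2) * dotv u2 v
   - ((C1' + C2) / 2 * (C2 * dotv u2 v) - (C1' + C2) / 2 * ((C1' + C2) / 2) * dotv v v)
   <= ((C2 - C1') / 2) ^+ 2 * dotv v v.
  set A := dotv v v in hA V1 V2 *; set B := dotv u2 v in V1 V2 *.
  set D := dotv u2 u2 in V1 V2 *.
  set Y1 := dotv (ybar b y) theta_k1 in V1 V2.
  set Y0 := dotv (ybar b y) theta_k in V1 V2.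
  have hs : 0 <= C1' * (B - A) + C2 * (B - D) by lra.
  have : 0 <= C2 * (C1' * (B - A) + C2 * (B - D)) by apply: mulr_ge0 => //; lra.
  move=> h; lra.
have htN : t ^+ 2 <= N ^+ 2.
  rewrite /N !exprMn !normv2 /t.
  apply: le_trans hcs _.
  rewrite -mulrA; apply: ler_wpM2r => //; lra.
have tN : `|t| <= N.
  by rewrite -ler_sqr ?nnegrE ?normr_ge0 // real_normK ?num_real.
move: tN; rewrite ler_norml => /andP[tl tu].
rewrite /t in tl tu.
have ybi : ybar b y i 0 = b i * y i by rewrite mxE.
split=> hyp.
  have g : b i * y i < C2 * dotv u2 z by lra.
  split; last by [].
  set s := alpha - theta_k1 i 0.
  have V := VI (d := s *: delta_mx i 0) opt2.
  have feas : box_feasible alpha beta (theta_k1 + s *: delta_mx i 0).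
    move=> j; have := opt2.1 j; rewrite !mxE.
    case: (eqVneq j i) => [->|hji] /andP[h1 h2]; rewrite /= ?mulr1 ?mulr0 ?addr0.
      by rewrite /s subrKC lexx /=; lra.
    by rewrite h1 h2.
  have {V} := V feas.
  rewrite -scalemxAr Zcol -/z (dotvZr s z) (dotvZr s (delta_mx i 0)) dotv_delta ybi -/u2 -/C2.
  have := opt2.1 i; case/andP => h1 h2 hv.
  have : s * (C2 * dotv u2 z - b i * y i) >= 0 by lra.
  rewrite /s => h3; nra.
have g : C2 * dotv u2 z < b i * y i by lra.
split; last by [].
set s := beta - theta_k1 i 0.
have V := VI (d := s *: delta_mx i 0) opt2.
have feas : box_feasible alpha beta (theta_k1 + s *: delta_mx i 0).
  move=> j; have := opt2.1 j; rewrite !mxE.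
  case: (eqVneq j i) => [->|hji] /andP[h1 h2]; rewrite /= ?mulr1 ?mulr0 ?addr0.
    by rewrite /s subrKC lexx andbT; lra.
  by rewrite h1 h2.
have {V} := V feas.
rewrite -scalemxAr Zcol -/z (dotvZr s z) (dotvZr s (delta_mx i 0)) dotv_delta ybi -/u2 -/C2.
have := opt2.1 i; case/andP => h1 h2 hv.
have : s * (C2 * dotv u2 z - b i * y i) >= 0 by lra.
rewrite /s => h3; nra.
Qed.
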